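(* Let $A$ be a finitely generated torsion $\Lambda$-module, $M=A^\circ$ its $\mathbb{Z}_p$-torsion submodule. (i) If $x\in M$ with $p\le p^l=\mathrm{ess.ord}(x)$ and $g\in\Lambda$ satisfies $gx=0$, then $g\equiv 0\bmod p^l$. (ii) There is a distinguished polynomial $G(T)\in\mathbb{Z}_p[T]$ such that $G(T)A\subseteq M$ and $\mathrm{ord}(y)=\mathrm{ess.ord}(y)$ for all $y\in G(T)A$. (iii) If $x\in A\setminus D(A)$ and $p^{\delta(x)}x=c+z$ with $c\in\mathcal{L}(A)$, $z\in M$, then $c\notin p\,\mathcal{L}(A)$.
   Context: $p$ is an odd prime, $\Lambda=\mathbb{Z}_p[[T]]$. For a finitely generated torsion $\Lambda$-module $A$: $A^\circ=M(A)$ is its $\mathbb{Z}_p$-torsion submodule; $\mathcal{L}(A)=\{x\in A:\ p\text{-rank}(\Lambda x)<\infty\}$; $D(A)=\mathcal{L}(A)+M(A)$ (the module of decomposable elements). For $x\in M(A)$, $\mathrm{ord}(x)=\min\{p^k: p^kx=0\}$ and the essential order $\mathrm{ess.ord}(x)$ is the common value of $\mathrm{ord}(T^jx)$ for all sufficiently large $j$. For $x\in A\setminus D(A)$, $\delta(x)=\min\{k>0: p^kx\in D(A)\}$. *)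

(* Defs.v *)
From HB Require Import structures.
From mathcomp Require Import all_boot all_order all_algebra.
Set Implicit Arguments. Unset Strict Implicit. Unset Printing Implicit Defensive.
Import GRing.Theory.

Section Iwasawa.
Variable p : nat.

(* p-adic integers as digit expansions a = sum_n (a n) p^n, digits in 'F_p
   (for p prime, 'F_p is exactly {0,..,p-1}). *)
Definition Zp := nat -> 'F_p.

Definition zp_trunc (a : Zp) (n : nat) : nat := \sum_(i < n) (a i : nat) * p ^ i.

(* digit n of x is (x %/ p^n) mod p; it only depends on x mod p^(n+1) *)
Definition zp_nat (m : nat) : Zp := fun n => inZp (m %/ p ^ n).
Definition zp_zero : Zp := zp_nat 0.
Definition zp_one : Zp := zp_nat 1.
Definition zp_add (a b : Zp) : Zp :=
  fun n => inZp ((zp_trunc a n.+1 + zp_trunc b n.+1) %/ p ^ n).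
Definition zp_mul (a b : Zp) : Zp :=
  fun n => inZp ((zp_trunc a n.+1 * zp_trunc b n.+1) %/ p ^ n).
Definition zp_opp (a : Zp) : Zp :=
  fun n => inZp ((p ^ n.+1 - zp_trunc a n.+1) %/ p ^ n).

(* Lambda = Z_p[[T]] : coefficient sequences *)
Definition Lam := nat -> Zp.
Definition lam_const (c : Zp) : Lam := fun i => if i == 0 then c else zp_zero.
Definition lam_zero : Lam := lam_const zp_zero.
Definition lam_one : Lam := lam_const zp_one.
Definition lam_T : Lam := fun i => if i == 1 then zp_one else zp_zero.
Definition lam_add (f g : Lam) : Lam := fun i => zp_add (f i) (g i).
Definition lam_mul (f g : Lam) : Lam :=
  fun i => \big[zp_add/zp_zero]_(j < i.+1) zp_mul (f j) (g (i - j)).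

(* distinguished polynomial: monic polynomial in Z_p[T] whose non-leading
   coefficients are divisible by p *)
Definition distinguished (G : Lam) : Prop :=
  exists n, [/\ G n = zp_one,
               (forall i, n < i -> G i = zp_zero) &
               (forall i, i < n -> (G i 0 : nat) = 0)].

Record is_lam_module (A : zmodType) (act : Lam -> A -> A) : Prop := {
  act_addr : forall f x y, (act f (x + y) = act f x + act f y)%R;
  act_addl : forall f g x, (act (lam_add f g) x = act f x + act g x)%R;
  act_mul  : forall f g x, act (lam_mul f g) x = act f (act g x);
  act_one  : forall x, act lam_one x = x }.

Section Module.
Variables (A : zmodType) (act : Lam -> A -> A).

Definition finitely_generated : Prop :=
  exists n (e : 'I_n -> A), forall x : A,
    exists c : 'I_n -> Lam, (x = \sum_(i < n) act (c i) (e i))%R.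

Definition lam_torsion : Prop :=
  forall x : A, exists2 f : Lam, f <> lam_zero & (act f x = 0)%R.

Definition inM (x : A) : Prop := exists k, (x *+ (p ^ k) = 0)%R.

Definition is_ord (x : A) (k : nat) : Prop :=
  (x *+ (p ^ k) = 0)%R /\ forall k', k' < k -> (x *+ (p ^ k') <> 0)%R.

Definition is_essord (x : A) (l : nat) : Prop :=
  exists J, forall j, J <= j -> is_ord (iter j (act lam_T) x) l.

(* L(A): p-rank of Lambda x finite, i.e. (Lambda x)/p(Lambda x) finite *)
Definition inL (x : A) : Prop :=
  exists n (s : nat -> Lam), forall f : Lam,
    exists2 i, i < n & exists g : Lam, (act f x = act (s i) x + (act g x) *+ p)%R.

Definition inD (x : A) : Prop :=
  exists c z, [/\ inL c, inM z & (x = c + z)%R].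

Definition is_delta (x : A) (k : nat) : Prop :=
  [/\ 0 < k, inD (x *+ (p ^ k))%R &
      forall k', 0 < k' < k -> ~ inD (x *+ (p ^ k'))%R].

End Module.
End Iwasawa.

(* Main.v *)
Require Import Defs.
From Stdlib Require Import FunctionalExtensionality.
From HB Require Import structures.
From mathcomp Require Import all_boot all_order all_algebra zify ring.
From mathcomp Require Import boolp.
Import GRing.Theory.
Set Implicit Arguments. Unset Strict Implicit. Unset Printing Implicit Defensive.
Import GRing.Theory.

Section ZpTrunc.
Variable p : nat.
Hypothesis pP : prime p.

Notation ZZ := (Defs.Zp p).
Local Notation T := (@zp_trunc p).

Lemma p_gt0 : 0 < p. Proof. exact: prime_gt0. Qed.
Lemma p_gt1 : 1 < p. Proof. exact: prime_gt1. Qed.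
Lemma pX_gt0 n : 0 < p ^ n. Proof. by rewrite expn_gt0 p_gt0. Qed.

Lemma digit_lt (a : ZZ) i : (a i : nat) < p.
Proof. have := ltn_ord (a i). by rewrite [X in _ < X -> _]Fp_cast. Qed.

Lemma val_inFp m : ((inZp m : 'F_p) : nat) = m %% p.
Proof. by rewrite /= Fp_cast. Qed.

Lemma truncS (a : ZZ) n : T a n.+1 = T a n + (a n : nat) * p ^ n.
Proof. by rewrite /zp_trunc big_ord_recr. Qed.

Lemma trunc0 (a : ZZ) : T a 0 = 0.
Proof. by rewrite /zp_trunc big_ord0. Qed.

Lemma trunc_lt (a : ZZ) n : T a n < p ^ n.
Proof.
elim: n => [|n IH]; first by rewrite trunc0.
rewrite truncS expnS.
have h := digit_lt a n.
have : (a n : nat) <= p.-1 by rewrite -ltnS prednK // p_gt0.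
move=> h2.
have hp := p_gt0.
nia.
Qed.

Lemma mod_split X a b : 0 < a -> 0 < b ->
  X %% (a * b) = X %% a + (X %/ a %% b) * a.
Proof.
move=> a0 b0.
rewrite {1}(divn_eq X a) {1}(divn_eq (X %/ a) b).
have -> : (X %/ a %/ b * b + X %/ a %% b) * a + X %% a =
          X %/ a %/ b * (a * b) + (X %/ a %% b * a + X %% a) by ring.
rewrite modnMDl modn_small; first by rewrite addnC.
have h1 := ltn_pmod X a0. have h2 := ltn_pmod (X %/ a) b0.
nia.
Qed.

Lemma trunc_mod (a : ZZ) n m : n <= m -> T a m %% p ^ n = T a n.
Proof.
move=> /subnK <-; elim: (m - n) => [|k IH].
  by rewrite add0n modn_small // trunc_lt.
rewrite addSn truncS -(modnDml) IH.
rewrite -modnDmr expnD mulnA modnMl addn0 modn_small //; exact: trunc_lt.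
Qed.

Lemma digit_trunc (a : ZZ) n : (a n : nat) = T a n.+1 %/ p ^ n.
Proof.
rewrite truncS divnDr ?dvdn_mull // mulnK ?pX_gt0 //.
by rewrite divn_small ?trunc_lt.
Qed.

Lemma zp_eqP (a b : ZZ) : (forall n, T a n = T b n) -> a = b.
Proof.
move=> h; apply: functional_extensionality_dep => n.
by apply: val_inj; rewrite /= !digit_trunc h.
Qed.

Definition compat (F : nat -> nat) := forall n m, n <= m -> F m %% p ^ n = F n %% p ^ n.

Definition digitsOf (F : nat -> nat) : ZZ := fun n => inZp (F n.+1 %/ p ^ n).

Lemma trunc_digitsOf F : compat F -> forall n, T (digitsOf F) n = F n %% p ^ n.
Proof.
move=> cF; elim=> [|n IH]; first by rewrite trunc0 expn0 modn1.
rewrite truncS IH val_inFp -(cF n n.+1) // expnS mulnC.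
by rewrite [p * _]mulnC mod_split ?p_gt0 ?pX_gt0 // mulnC.
Qed.
End ZpTrunc.

Section Iw.
Variable p : nat.
Hypothesis pP : prime p.
Notation ZZ := (Defs.Zp p).
Local Notation T := (@zp_trunc p).

Lemma compat_trunc (a : ZZ) : compat p (T a).
Proof. by move=> n m nm; rewrite trunc_mod // modn_small // trunc_lt. Qed.

Lemma T_add (a b : ZZ) n : T (zp_add a b) n = (T a n + T b n) %% p ^ n.
Proof.
apply: (trunc_digitsOf pP (F := fun n => T a n + T b n)).
by move=> k m km; rewrite -modnDm !trunc_mod // modnDm.
Qed.

Lemma T_mul (a b : ZZ) n : T (zp_mul a b) n = (T a n * T b n) %% p ^ n.
Proof.
apply: (trunc_digitsOf pP (F := fun n => T a n * T b n)).
by move=> k m km; rewrite -modnMm !trunc_mod // modnMm.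
Qed.

Lemma T_nat m n : T (zp_nat p m) n = m %% p ^ n.
Proof. exact: (trunc_digitsOf pP (F := fun _ => m)). Qed.

Lemma T_opp (a : ZZ) n : T (zp_opp a) n = (p ^ n - T a n) %% p ^ n.
Proof.
apply: (trunc_digitsOf pP (F := fun n => p ^ n - T a n)).
move=> k m km; apply/eqP.
rewrite -(eqn_modDr (T a m)) subnK; last by apply: ltnW; apply: trunc_lt.
rewrite -modnDmr trunc_mod // subnK; last by apply: ltnW; apply: trunc_lt.
by rewrite -(subnK km) expnD modnMl modnn.
Qed.

Lemma zp_addA : associative (@zp_add p).
Proof. by move=> a b c; apply: zp_eqP => // n; rewrite !T_add modnDml modnDmr addnA. Qed.
Lemma zp_addC : commutative (@zp_add p).
Proof. by move=> a b; apply: zp_eqP => // n; rewrite !T_add addnC. Qed.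
Lemma zp_add0 : left_id (zp_zero p) (@zp_add p).
Proof. by move=> a; apply: zp_eqP => // n; rewrite T_add T_nat mod0n add0n modn_small // trunc_lt. Qed.
Lemma zp_addN : left_inverse (zp_zero p) (@zp_opp p) (@zp_add p).
Proof.
move=> a; apply: zp_eqP => // n; rewrite T_add T_opp T_nat mod0n modnDml subnK ?modnn //.
by apply: ltnW; apply: trunc_lt.
Qed.

HB.instance Definition _ := gen_eqMixin ZZ.
HB.instance Definition _ := gen_choiceMixin ZZ.
HB.instance Definition _ := GRing.isZmodule.Build ZZ zp_addA zp_addC zp_add0 zp_addN.

Lemma zp_mulA : associative (@zp_mul p).
Proof. move=> a b c; apply: zp_eqP => // n; rewrite !T_mul. by rewrite modnMmr (modnMml (T a n * T b n)) mulnA. Qed.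
Lemma zp_mulC : commutative (@zp_mul p).
Proof. by move=> a b; apply: zp_eqP => // n; rewrite !T_mul mulnC. Qed.
Lemma zp_mul1 : left_id (zp_one p) (@zp_mul p).
Proof. by move=> a; apply: zp_eqP => // n; rewrite T_mul T_nat (modnMml 1) mul1n modn_small // trunc_lt. Qed.
Lemma zp_mulDl : left_distributive (@zp_mul p) (@zp_add p).
Proof.
move=> a b c; apply: zp_eqP => // n; rewrite !T_mul !T_add !T_mul.
by rewrite (modnMml (T a n + T b n)) mulnDl -modnDm.
Qed.
Lemma zp_one_neq0 : zp_one p != zp_zero p.
Proof.
apply/eqP => h; have := congr1 (fun a => T a 1) h.
by rewrite !T_nat expn1 mod0n modn_small // p_gt1.
Qed.

HB.instance Definition _ := GRing.Zmodule_isComNzRing.Build ZZ zp_mulA zp_mulC zp_mul1 zp_mulDl zp_one_neq0.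

Lemma T_addE (a b : ZZ) n : T (a + b)%R n = (T a n + T b n) %% p ^ n. Proof. exact: T_add. Qed.
Lemma T_mulE (a b : ZZ) n : T (a * b)%R n = (T a n * T b n) %% p ^ n. Proof. exact: T_mul. Qed.
Lemma T_0 n : T 0%R n = 0. Proof. by rewrite /= T_nat mod0n. Qed.
Lemma T_1 n : T 1%R n = 1 %% p ^ n. Proof. by rewrite /= T_nat. Qed.
Lemma zp_natE m : zp_nat p m = m%:R%R.
Proof.
apply: zp_eqP => // n; rewrite T_nat; elim: m => [|m IH]; first by rewrite mod0n T_0.
by rewrite mulrS T_addE T_1 -IH modnDm add1n.
Qed.
Lemma T_natr m n : T m%:R%R n = m %% p ^ n. Proof. by rewrite -zp_natE T_nat. Qed.
Lemma T_oppE (a : ZZ) n : T (- a)%R n = (p ^ n - T a n) %% p ^ n. Proof. exact: T_opp. Qed.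

Local Open Scope ring_scope.
Notation L := (Lam p).

Definition lam_opp (f : L) : L := fun i => - f i.

Lemma lam_zeroE i : lam_zero p i = 0.
Proof. by rewrite /lam_zero /lam_const; case: (i == 0%N). Qed.
Lemma lam_oneE i : lam_one p i = (i == 0%N)%:R.
Proof. by rewrite /lam_one /lam_const; case: (i == 0%N). Qed.
Lemma lam_constE (c : ZZ) i : lam_const c i = if i == 0%N then c else 0.
Proof. by []. Qed.

Lemma lam_ext (f g : L) : (forall i, f i = g i) -> f = g.
Proof. exact: functional_extensionality. Qed.

Lemma lam_addA : associative (@lam_add p).
Proof. by move=> f g h; apply: lam_ext => i; exact: (addrA (f i)). Qed.
Lemma lam_addC : commutative (@lam_add p).
Proof. by move=> f g; apply: lam_ext => i; exact: (addrC (f i)). Qed.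
Lemma lam_add0 : left_id (lam_zero p) (@lam_add p).
Proof. by move=> f; apply: lam_ext => i; rewrite /lam_add lam_zeroE; exact: add0r. Qed.
Lemma lam_addN : left_inverse (lam_zero p) lam_opp (@lam_add p).
Proof. by move=> f; apply: lam_ext => i; rewrite /lam_add lam_zeroE; exact: addNr. Qed.

HB.instance Definition _ := gen_eqMixin L.
HB.instance Definition _ := gen_choiceMixin L.
HB.instance Definition _ := GRing.isZmodule.Build L lam_addA lam_addC lam_add0 lam_addN.

Lemma lam_mulE (f g : L) i : lam_mul f g i = \sum_(j < i.+1) f j * g (i - j)%N.
Proof. by []. Qed.

Definition tp (n : nat) (f : L) : {poly ZZ} := \poly_(i < n) f i.

Lemma mul_coef n (f g : L) i : (i < n)%N -> lam_mul f g i = (tp n f * tp n g)`_i.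
Proof.
move=> lt_in; rewrite lam_mulE coefM; apply: eq_bigr => j _.
rewrite /tp !coef_poly (leq_ltn_trans (leq_ord j)) //.
by rewrite (leq_ltn_trans (leq_subr _ _)).
Qed.

Lemma lam_mulA : associative (@lam_mul p).
Proof.
move=> f g h; apply: lam_ext => i.
have e1 : lam_mul f (lam_mul g h) i = (tp i.+1 f * (tp i.+1 g * tp i.+1 h))`_i.
  rewrite lam_mulE coefM; apply: eq_bigr => j _.
  rewrite (mul_coef (n := i.+1)); last by rewrite ltnS leq_subr.
  by rewrite /tp coef_poly ltn_ord.
have e2 : lam_mul (lam_mul f g) h i = ((tp i.+1 f * tp i.+1 g) * tp i.+1 h)`_i.
  rewrite lam_mulE coefM; apply: eq_bigr => j _.
  rewrite (mul_coef (n := i.+1)) ?ltn_ord //.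
  by rewrite /tp coef_poly ltnS leq_subr.
by rewrite e1 e2 mulrA.
Qed.

Lemma lam_mulC : commutative (@lam_mul p).
Proof.
move=> f g; apply: lam_ext => i.
by rewrite (mul_coef (n := i.+1)) // (mul_coef (n := i.+1)) // mulrC.
Qed.

Lemma lam_mul1 : left_id (lam_one p) (@lam_mul p).
Proof.
move=> f; apply: lam_ext => i; rewrite lam_mulE big_ord_recl /= lam_oneE mul1r subn0.
by rewrite big1 ?addr0 // => j _; rewrite lam_oneE /= mul0r.
Qed.

Lemma lam_mulDl : left_distributive (@lam_mul p) (@lam_add p).
Proof.
move=> f g h; apply: lam_ext => i.
change (lam_mul (lam_add f g) h i = lam_mul f h i + lam_mul g h i).
rewrite !lam_mulE -big_split /=.
by apply: eq_bigr => j _; rewrite mulrDl.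
Qed.

Lemma lam_one_neq0 : lam_one p != lam_zero p.
Proof.
apply/eqP => h; have := congr1 (fun f : L => f 0%N) h.
by rewrite lam_oneE lam_zeroE /=; apply/eqP; exact: oner_neq0.
Qed.

HB.instance Definition _ := GRing.Zmodule_isComNzRing.Build L lam_mulA lam_mulC lam_mul1 lam_mulDl lam_one_neq0.

Lemma lam_addE (f g : L) i : (f + g) i = f i + g i. Proof. by []. Qed.
Lemma lam_oppE (f : L) i : (- f) i = - f i. Proof. by []. Qed.
Lemma lam_0E i : (0 : L) i = 0. Proof. exact: lam_zeroE. Qed.
Lemma lam_1E i : (1 : L) i = (i == 0%N)%:R. Proof. exact: lam_oneE. Qed.
Lemma lam_mulE' (f g : L) i : (f * g) i = \sum_(j < i.+1) f j * g (i - j)%N.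
Proof. by []. Qed.
Lemma lam_subE (f g : L) i : (f - g) i = f i - g i. Proof. by []. Qed.
Lemma lam_sumE I (r : seq I) (P : pred I) (F : I -> L) i :
  (\sum_(j <- r | P j) F j) i = \sum_(j <- r | P j) F j i.
Proof.
elim: r => [|x r IH]; first by rewrite !big_nil lam_0E.
by rewrite !big_cons; case: (P x); rewrite ?lam_addE IH.
Qed.

Definition Pz : L := p%:R.

Lemma natL_E m i : (m%:R : L) i = if i == 0%N then m%:R else 0.
Proof.
elim: m => [|m IH]; first by rewrite !mulr0n lam_0E; case: ifP.
rewrite mulrS lam_addE IH lam_1E; case: (i == 0%N) => /=; first by rewrite -mulrS.
by rewrite addr0.
Qed.

Lemma const_mul (c : ZZ) (h : L) i : (lam_const c * h) i = c * h i.
Proof.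
rewrite lam_mulE' big_ord_recl /= subn0 big1 ?addr0 // => j _.
by rewrite /lam_const /= mul0r.
Qed.

Lemma const_nat m : lam_const (m%:R : ZZ) = (m%:R : L).
Proof. by apply: lam_ext => i; rewrite natL_E. Qed.

Lemma natL_mul m (h : L) i : (m%:R * h) i = m%:R * h i.
Proof. by rewrite -const_nat const_mul. Qed.

Lemma lamT_mul (f : L) i : (lam_T p * f) i = if i is k.+1 then f k else 0.
Proof.
rewrite lam_mulE'; case: i => [|k].
  by rewrite big_ord_recl big_ord0 /lam_T /= mul0r addr0.
rewrite big_ord_recl big_ord_recl /= big1 ?addr0.
  by rewrite /lam_T /= mul0r mul1r add0r subSS subn0.
by move=> j _; rewrite /lam_T /= mul0r.
Qed.

Lemma lamTX_mul j (f : L) i : (lam_T p ^+ j * f) i = if (j <= i)%N then f (i - j)%N else 0.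
Proof.
elim: j i => [|j IH] i; first by rewrite expr0 mul1r subn0.
rewrite exprS -mulrA lamT_mul; case: i => [|i]; rewrite ?IH ?ltnS ?subSS //.
Qed.

Lemma lamTX_coef j i : (lam_T p ^+ j) i = (i == j)%:R.
Proof.
rewrite -[lam_T p ^+ j]mulr1 lamTX_mul lam_1E.
case: (leqP j i) => [ji|ij]; last by rewrite (ltn_eqF ij).
by rewrite subn_eq0 eqn_leq ji andbT.
Qed.

Lemma trunc_shift (a : ZZ) k d :
  T a (k + d) = (T a k + p ^ k * T ((fun n => a (n + k)%N) : ZZ) d)%N.
Proof.
elim: d => [|d IH]; first by rewrite addn0 trunc0 muln0 addn0.
rewrite addnS !truncS IH (addnC d k) expnD.
by rewrite /=; ring.
Qed.

Lemma zp_shift k (a : ZZ) : T a k = 0%N ->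
  a = (p ^ k)%:R * ((fun n => a (n + k)%N) : ZZ).
Proof.
move=> ak; apply: zp_eqP => // m; rewrite T_mulE T_natr.
case: (leqP m k) => [mk|km].
  rewrite -(trunc_mod pP a mk) ak mod0n.
  have /eqP -> : (p ^ k %% p ^ m == 0)%N by rewrite -/(dvdn _ _) dvdn_exp2l.
  by rewrite mul0n mod0n.
have [d ->] : exists d, m = (k + d.+1)%N by exists (m - k).-1; lia.
rewrite trunc_shift ak add0n.
rewrite [(p ^ k %% _)%N]modn_small; last first.
  by rewrite ltn_exp2l ?p_gt1 // addnS ltnS leq_addr.
rewrite expnD -muln_modr trunc_mod //; lia.
Qed.

Definition r1 (a : ZZ) := T a 1.
Definition pdiv (f : L) := exists g, f = Pz * g.

Lemma r1_mul a b : r1 (a * b) = ((r1 a * r1 b) %% p)%N.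
Proof. by rewrite /r1 T_mulE expn1. Qed.
Lemma r1_add a b : r1 (a + b) = ((r1 a + r1 b) %% p)%N.
Proof. by rewrite /r1 T_addE expn1. Qed.
Lemma r1_lt a : (r1 a < p)%N.
Proof. by have := trunc_lt pP a 1; rewrite expn1. Qed.
Lemma r1_natr m : r1 m%:R = (m %% p)%N.
Proof. by rewrite /r1 T_natr expn1. Qed.

Lemma r1_prime a b : r1 (a * b) = 0%N -> r1 a = 0%N \/ r1 b = 0%N.
Proof.
rewrite r1_mul => /eqP; rewrite -/(dvdn _ _) Euclid_dvdM // => /orP [] h.
  by left; apply/eqP; rewrite -(modn_small (r1_lt a)); apply/eqP/eqP.
by right; apply/eqP; rewrite -(modn_small (r1_lt b)); apply/eqP/eqP.
Qed.

Lemma r1_p_mul a : r1 (p%:R * a) = 0%N.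
Proof. by rewrite r1_mul r1_natr modnn mul0n mod0n. Qed.

Lemma zp_pdiv (a : ZZ) : r1 a = 0%N -> exists b, a = p%:R * b.
Proof. by move=> h; exists (fun n => a (n + 1)%N); rewrite {1}(zp_shift h) expn1. Qed.

Lemma pdivP f : pdiv f <-> forall i, r1 (f i) = 0%N.
Proof.
split.
  by move=> [g ->] i; rewrite /Pz natL_mul r1_p_mul.
move=> h; exists (fun i => (fun n => f i (n + 1)%N) : ZZ).
apply: lam_ext => i; rewrite /Pz natL_mul.
by rewrite {1}(zp_shift (h i)) expn1.
Qed.

Lemma pdivD f g : pdiv f -> pdiv g -> pdiv (f + g).
Proof. by move=> [a ->] [b ->]; exists (a + b); rewrite mulrDr. Qed.
Lemma pdivN f : pdiv f -> pdiv (- f).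
Proof. by move=> [a ->]; exists (- a); rewrite mulrN. Qed.
Lemma pdivM f g : pdiv g -> pdiv (f * g).
Proof. by move=> [a ->]; exists (f * a); rewrite mulrCA. Qed.
Lemma pdivP' g : pdiv (Pz * g). Proof. by exists g. Qed.

Lemma pdiv_TX j f : pdiv (lam_T p ^+ j * f) -> pdiv f.
Proof.
move/pdivP => h; apply/pdivP => i; have := h (i + j)%N.
by rewrite lamTX_mul leq_addl addnK.
Qed.

Lemma factor (g : L) l : (exists h, g = Pz ^+ l * h) \/
  (exists a h, (a < l)%N /\ g = Pz ^+ a * h /\ ~ pdiv h).
Proof.
elim: l => [|l [[h gh]|[a [h [al [gh nh]]]]]].
- by left; exists g; rewrite expr0 mul1r.
- have [[h' hh]|nh] := EM (pdiv h).
    by left; exists h'; rewrite gh hh exprSr mulrA.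
  by right; exists l, h.
- by right; exists a, h; split=> //; apply: ltnW.
Qed.

Lemma inv_mod d : (0 < d < p)%N -> exists u, ((d * u) %% p = 1)%N.
Proof.
move=> /andP [d0 dp].
have [a _ ha] := Bezoutl d (prime_gt0 pP).
have g1 : gcdn p d = 1%N.
  apply/eqP; rewrite -/(coprime p d) prime_coprime //.
  by apply/negP => /(dvdn_leq d0); rewrite leqNgt dp.
rewrite g1 in ha.
exists (a * p.-1)%N.
have e1 : ((d * (a * p.-1)) + p.-1 = (1 + a * d) * p.-1)%N by ring.
apply/eqP; rewrite -(modn_small (p_gt1 pP)) -(eqn_modDr p.-1) e1.
rewrite -modnMml (eqP ha) mul0n mod0n.
by rewrite add1n prednK ?modnn // prime_gt0.
Qed.

Lemma mul_locL (f f' g : L) i : (forall j, (j <= i)%N -> f j = f' j) ->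
  (f * g) i = (f' * g) i.
Proof.
move=> h; rewrite !lam_mulE'; apply: eq_bigr => j _.
by rewrite h // -ltnS.
Qed.

Lemma powX0 (y : L) : y 0%N = 0 -> forall k i, (i < k)%N -> (y ^+ k) i = 0.
Proof.
move=> y0; elim=> [|k IH] i //.
move=> ik; rewrite exprS lam_mulE' big1 // => j _.
case: (posnP j) => [->|jp]; first by rewrite y0 mul0r.
rewrite IH ?mulr0 //; have := ltn_ord j; lia.
Qed.

Lemma geom_prefix (y : L) : y 0%N = 0 -> forall j d,
  (\sum_(k < (j.+1 + d)%N) y ^+ k) j = (\sum_(k < j.+1) y ^+ k) j.
Proof.
move=> y0 j; elim=> [|d IH]; first by rewrite addn0.
rewrite addnS big_ord_recr /= lam_addE IH powX0 ?addr0 //.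
by rewrite ltnS leq_addr.
Qed.

Lemma geom (y : L) : y 0%N = 0 -> exists s, s * (1 - y) = 1.
Proof.
move=> y0; exists (fun i => (\sum_(k < i.+1) y ^+ k) i).
apply: lam_ext => i.
rewrite (mul_locL (f' := \sum_(k < i.+1) y ^+ k)); last first.
  by move=> j ji; have := geom_prefix y0 j (i - j); rewrite addSn subnKC.
have -> : (\sum_(k < i.+1) y ^+ k) * (1 - y) = 1 - y ^+ i.+1.
  by rewrite -[1 - y]opprB mulrN mulrC -subrX1 opprB.
by rewrite lam_subE powX0 ?subr0.
Qed.

Lemma r1_opp a : r1 (- a) = ((p - r1 a) %% p)%N.
Proof. by rewrite /r1 T_oppE expn1. Qed.
Lemma r1_0 : r1 0 = 0%N. Proof. by rewrite /r1 T_0. Qed.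

Lemma unitU (f : L) : ~ pdiv f ->
  exists c v r, lam_T p ^+ c = v * f + Pz * r.
Proof.
move=> nf.
have ex : exists i, r1 (f i) != 0%N.
  apply: contrapT => h; apply: nf; apply/pdivP => i.
  by apply/eqP; apply/negP => hi; apply: h; exists i; apply/negP.
case: (ex_minnP ex) => c fc cmin.
pose fl : L := fun i => if (i < c)%N then f i else 0.
pose w : L := fun i => f (i + c)%N.
have fE : f = fl + lam_T p ^+ c * w.
  apply: lam_ext => i; rewrite lam_addE lamTX_mul /fl /w.
  case: (ltnP i c) => ic; first by rewrite addr0.
  by rewrite add0r subnK.
have pfl : pdiv fl.
  apply/pdivP => i; rewrite /fl; case: ifP => ic; last exact: r1_0.
  apply/eqP; apply/negP => /negP h; have := cmin _ h; by rewrite leqNgt ic.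
have [u0 hu0] : exists u, ((r1 (w 0%N) * u) %% p = 1)%N.
  apply: inv_mod; rewrite /w add0n lt0n fc r1_lt //.
pose u : L := u0%:R.
pose z : L := 1 - u * w.
have z0 : r1 (z 0%N) = 0%N.
  rewrite /z lam_subE lam_1E /= /u natL_mul r1_add r1_opp r1_mul r1_natr.
  rewrite r1_natr (modnMml u0) mulnC hu0 (modn_small (p_gt1 pP)).
  rewrite (modn_small (m := (p - 1)%N)); last by rewrite ltn_subrL (prime_gt0 pP).
  by rewrite subnKC ?modnn // ltnW // p_gt1.
pose z0c : L := lam_const (z 0%N).
have pz0c : pdiv z0c.
  apply/pdivP => i; rewrite /z0c /lam_const; case: (i == 0%N) => //; exact: r1_0.
pose y := z - z0c.
have y0 : y 0%N = 0 by rewrite /y lam_subE /z0c /lam_const /= subrr.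
have [s hs] := geom y0.
exists c, (s * u).
have hp : pdiv (- ((s * u) * fl) + lam_T p ^+ c * (s * z0c)).
  apply: pdivD; first by apply: pdivN; apply: pdivM.
  by rewrite mulrA; apply: pdivM.
case: hp => r hr; exists r; rewrite -hr.
have uw : u * w = 1 - z0c - y by rewrite /y /z; ring.
have : s * (u * w) = 1 - s * z0c.
  rewrite uw; transitivity (s * (1 - y) - s * z0c); first ring.
  by rewrite hs.
move=> suw.
rewrite {1}fE.
transitivity (s * u * fl + lam_T p ^+ c * (s * (u * w)) - (s * u) * fl + lam_T p ^+ c * (s * z0c)).
  by rewrite suw; ring.
by ring.
Qed.

Definition lowp (c : nat) (E : L) : L := fun i => if (i < c)%N then E i else 0.
Definition highp (c : nat) (E : L) : L := fun i => E (i + c)%N.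

Lemma split_lh c E : E = lowp c E + lam_T p ^+ c * highp c E.
Proof.
apply: lam_ext => i; rewrite lam_addE lamTX_mul /lowp /highp.
case: (ltnP i c) => ic; first by rewrite addr0.
by rewrite add0r subnK.
Qed.

Definition congrL k (f g : L) := exists h, f = g + Pz ^+ k * h.

Lemma PzX k : Pz ^+ k = (p ^ k)%:R.
Proof. by rewrite /Pz natrX. Qed.

Lemma congrL_coef k f g : congrL k f g -> forall i, T (f i) k = T (g i) k.
Proof.
move=> [h ->] i; rewrite lam_addE PzX natL_mul T_addE T_mulE T_natr modnn mul0n mod0n addn0.
by rewrite modn_small // trunc_lt.
Qed.

Lemma coef_congrL k f g : (forall i, T (f i) k = T (g i) k) -> congrL k f g.
Proof.
move=> h.
have hz : forall i, T (f i - g i) k = 0%N.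
  move=> i; rewrite T_addE T_oppE h modnDmr subnKC ?modnn //.
  by apply: ltnW; apply: trunc_lt.
exists (fun i => (fun n => (f i - g i) (n + k)%N) : ZZ).
apply: lam_ext => i; rewrite lam_addE PzX natL_mul -(zp_shift (hz i)).
by rewrite addrC subrK.
Qed.

Lemma congrL_trans k f g h : congrL k f g -> congrL k g h -> congrL k f h.
Proof. by move=> [a ->] [b ->]; exists (b + a); rewrite mulrDr addrA. Qed.
Lemma congrL_sym k f g : congrL k f g -> congrL k g f.
Proof. by move=> [a ->]; exists (- a); rewrite mulrN addrK. Qed.
Lemma congrL_refl k f : congrL k f f.
Proof. by exists 0; rewrite mulr0 addr0. Qed.
Lemma congrL_weak k f g : congrL k.+1 f g -> congrL k f g.
Proof. by move=> [a ->]; exists (Pz * a); rewrite exprSr mulrA. Qed.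

Definition lim (F : nat -> L) : L := fun i => digitsOf p (fun n => T (F n i) n).

Lemma lim_congr F : (forall k, congrL k (F k.+1) (F k)) -> forall k, congrL k (lim F) (F k).
Proof.
move=> hF.
have chain : forall n m i, (n <= m)%N -> T (F m i) n = T (F n i) n.
  move=> n m i /subnK <-; elim: (m - n)%N => [|d IH]; first by rewrite add0n.
  rewrite addSn -IH -(trunc_mod pP (F (d + n).+1 i) (leq_addl d n)).
  rewrite (congrL_coef (hF (d + n)%N)) trunc_mod //; exact: leq_addl.
move=> k; apply: coef_congrL => i; rewrite /lim trunc_digitsOf //.
  by rewrite modn_small // trunc_lt.
move=> n m nm; rewrite trunc_mod // chain // modn_small //; exact: trunc_lt.
Qed.

Lemma congrL_eq f g : (forall k, congrL k f g) -> f = g.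
Proof.
move=> h; apply: lam_ext => i; apply: zp_eqP => // k.
exact: (congrL_coef (h k)).
Qed.

Section Weier.
Variables (f v r : L) (c : nat).
Hypothesis hT : lam_T p ^+ c = v * f + Pz * r.

Fixpoint wst (k : nat) : L * L * L :=
  match k with
  | 0 => (v, lam_T p ^+ c, - r)
  | k.+1 => let: (q, P, E) := wst k in
      (q - Pz ^+ k.+1 * (highp c E * v), P + Pz ^+ k.+1 * lowp c E, highp c E * r)
  end.

Definition wq k := (wst k).1.1.
Definition wP k := (wst k).1.2.
Definition wE k := (wst k).2.

Lemma wst_inv k : wq k * f - wP k = Pz ^+ k.+1 * wE k.
Proof.
elim: k => [|k IH]; first by rewrite /wq /wP /wE /= hT expr1; ring.
move: IH; rewrite /wq /wP /wE /=; case: (wst k) => [[q P] E] /= IH.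
have sp := split_lh c E.
have e : q * f - P = Pz ^+ k.+1 * (lowp c E + lam_T p ^+ c * highp c E) by rewrite -sp.
rewrite hT in e.
rewrite [Pz ^+ k.+2]exprS; set X := Pz ^+ k.+1 in e *.
transitivity (q * f - P - X * (highp c E * v * f + lowp c E)); first ring.
rewrite e; ring.
Qed.

Lemma wP_form k : [/\ wP k c = 1, forall i, (c < i)%N -> wP k i = 0 &
  forall i, (i < c)%N -> r1 (wP k i) = 0%N].
Proof.
elim: k => [|k [IH1 IH2 IH3]].
  rewrite /wP /=; split; first by rewrite lamTX_coef eqxx.
    by move=> i ci; rewrite lamTX_coef gtn_eqF.
  by move=> i ic; rewrite lamTX_coef ltn_eqF // r1_0.
move: IH1 IH2 IH3; rewrite /wP /=; case: (wst k) => [[q P] E] /= IH1 IH2 IH3.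
split.
- by rewrite lam_addE PzX natL_mul /lowp ltnn mulr0 addr0.
- by move=> i ci; rewrite lam_addE PzX natL_mul /lowp ltnNge ltnW //= mulr0 addr0 IH2.
- move=> i ic; rewrite lam_addE PzX natL_mul r1_add IH3 // add0n r1_mul r1_natr.
  by rewrite expnS modnMr mul0n !mod0n.
Qed.

Lemma wq_step k : congrL k (wq k.+1) (wq k).
Proof.
apply: congrL_weak; rewrite /wq /=; case: (wst k) => [[q P] E] /=.
by exists (- (highp c E * v)); rewrite mulrN.
Qed.

Lemma wP_step k : congrL k (wP k.+1) (wP k).
Proof.
apply: congrL_weak; rewrite /wP /=; case: (wst k) => [[q P] E] /=.
by exists (lowp c E).
Qed.

Lemma weier : exists q P, distinguished P /\ q * f = P.
Proof.
pose Q := lim wq; pose PP := lim wP.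
have hQ := lim_congr wq_step; have hP := lim_congr wP_step.
exists Q, PP; split; last first.
  apply/eqP; rewrite -subr_eq0; apply/eqP; apply: congrL_eq => k.
  have [a ea] := hQ k; have [b eb] := hP k.
  exists (a * f - b + Pz * wE k).
  rewrite /Q /PP in ea eb *; rewrite ea eb add0r.
  transitivity (wq k * f - wP k + Pz ^+ k * (a * f - b)); first ring.
  by rewrite wst_inv exprS; ring.
exists c; split.
- apply: zp_eqP => // n; rewrite (congrL_coef (hP n)).
  by have [-> _ _] := wP_form n.
- move=> i ci; apply: zp_eqP => // n; rewrite (congrL_coef (hP n)).
  by have [_ h _] := wP_form n; rewrite h.
- move=> i ic; rewrite digit_trunc // (_ : (p ^ 0)%N = 1%N) // divn1 (congrL_coef (hP 1%N)).
  by have [_ _ h] := wP_form 1; have := h i ic.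
Qed.
End Weier.

Section Mod.
Variables (A : zmodType) (act : L -> A -> A).
Hypothesis Hmod : is_lam_module act.

Lemma actD f g x : act (f + g) x = act f x + act g x.
Proof. exact: (act_addl Hmod). Qed.
Lemma actM f g x : act (f * g) x = act f (act g x).
Proof. exact: (act_mul Hmod). Qed.
Lemma act1 x : act 1 x = x.
Proof. exact: (act_one Hmod). Qed.
Lemma actxD f x y : act f (x + y) = act f x + act f y.
Proof. exact: (act_addr Hmod). Qed.
Lemma act0x x : act 0 x = 0.
Proof.
have := actD 0 0 x; rewrite addr0 => h.
by apply: (addrI (act 0 x)); rewrite -h addr0.
Qed.
Lemma actx0 f : act f 0 = 0.
Proof.
have := actxD f 0 0; rewrite addr0 => h.
by apply: (addrI (act f 0)); rewrite -h addr0.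
Qed.
Lemma actN f x : act (- f) x = - act f x.
Proof.
apply/eqP; rewrite -subr_eq0 opprK -actD addNr; exact/eqP/act0x.
Qed.
Lemma actxN f x : act f (- x) = - act f x.
Proof.
apply/eqP; rewrite -subr_eq0 opprK -actxD addNr; exact/eqP/actx0.
Qed.
Lemma act_natr n x : act n%:R x = x *+ n.
Proof.
elim: n => [|n IH]; first by rewrite mulr0n act0x.
by rewrite mulrS actD act1 IH mulrS.
Qed.
Lemma act_mulrn f x n : act f (x *+ n) = act f x *+ n.
Proof.
elim: n => [|n IH]; first by rewrite !mulr0n actx0.
by rewrite !mulrS actxD IH.
Qed.
Lemma act_comm f g x : act f (act g x) = act g (act f x).
Proof. by rewrite -!actM mulrC. Qed.
Lemma act_sum f n (F : 'I_n -> A) : act f (\sum_(i < n) F i) = \sum_(i < n) act f (F i).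
Proof.
elim: n F => [|n IH] F; first by rewrite !big_ord0 actx0.
by rewrite !big_ord_recr /= actxD IH.
Qed.
Lemma act_iter j x : iter j (act (lam_T p)) x = act (lam_T p ^+ j) x.
Proof.
elim: j => [|j IH]; first by rewrite /= expr0 act1.
by rewrite iterS IH exprS actM.
Qed.
Lemma act_Pz k x : act (Pz ^+ k) x = x *+ (p ^ k).
Proof. by rewrite PzX act_natr. Qed.

Lemma inM_act f (x : A) : inM p x -> inM p (act f x).
Proof. by move=> [k hk]; exists k; rewrite -act_mulrn hk actx0. Qed.
Lemma inM_add (x y : A) : inM p x -> inM p y -> inM p (x + y).
Proof.
move=> [k hk] [m hm]; exists (k + m)%N; rewrite mulrnDl expnD.
by rewrite mulrnA hk mul0rn add0r mulnC mulrnA hm mul0rn.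
Qed.

Section LemB.
Variable S : A -> Prop.
Hypotheses (S0 : S 0) (SD : forall x y, S x -> S y -> S (x + y))
  (SA : forall f x, S x -> S (act f x)).

Lemma powU (f v r : L) c : lam_T p ^+ c = v * f + Pz * r ->
  forall m, exists F R, (lam_T p ^+ c) ^+ m = F * f + Pz ^+ m * R.
Proof.
move=> hT; elim=> [|m [F [R e]]].
  by exists 0, 1; rewrite !expr0 mul0r add0r mulr1.
exists (F * (v * f + Pz * r) + Pz ^+ m * R * v), (R * r).
rewrite exprSr e hT exprSr; ring.
Qed.

Lemma lemB b : forall g, S (g *+ (p ^ b)) -> exists s, forall lam,
  (exists j, S (act (lam_T p ^+ j * lam) g)) -> S (act (lam_T p ^+ s * lam) g).
Proof.
elim: b => [|b IH] g hg.
  by exists 0%N => lam _; apply: SA; rewrite expn0 mulr1n in hg.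
have [[f [hf nf]]|nB] := EM (exists f, S (act f g) /\ ~ pdiv f).
  have [c [v [r hT]]] := unitU nf.
  have [F [R e]] := powU hT b.+1.
  exists (c * b.+1)%N => lam _.
  rewrite exprM e mulrDl actD; apply: SD.
    by rewrite (_ : F * f * lam = (lam * F) * f) ?actM; [apply: SA; apply: SA; exact: hf | ring].
  by rewrite (_ : Pz ^+ b.+1 * R * lam = (R * lam) * Pz ^+ b.+1) ?actM ?act_Pz; [apply: SA; apply: SA; exact: hg | ring].
have hg' : S ((g *+ p) *+ (p ^ b)) by rewrite -mulrnA -expnS.
have [s hs] := IH _ hg'.
exists s => lam [j hj].
have pl : pdiv lam.
  apply: (pdiv_TX (j := j)); apply: contrapT => np; apply: nB.
  by exists (lam_T p ^+ j * lam).
case: pl => l1 el; rewrite el in hj *.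
have e1 : forall t, act (lam_T p ^+ t * (Pz * l1)) g = act (lam_T p ^+ t * l1) (g *+ p).
  by move=> t; rewrite -act_natr -actM /Pz; congr (act _ g); ring.
rewrite e1; apply: hs; exists j; by rewrite -e1.
Qed.
End LemB.

Definition spanI n (e : 'I_n -> A) x := exists c : 'I_n -> L, x = \sum_(i < n) act (c i) (e i).

Lemma spanI0 n (e : 'I_n -> A) : spanI e 0.
Proof. by exists (fun _ => 0); rewrite big1 // => i _; rewrite act0x. Qed.
Lemma spanID n (e : 'I_n -> A) x y : spanI e x -> spanI e y -> spanI e (x + y).
Proof.
move=> [c ->] [d ->]; exists (fun i => c i + d i); rewrite -big_split /=.
by apply: eq_bigr => i _; rewrite actD.
Qed.
Lemma spanIA n (e : 'I_n -> A) f x : spanI e x -> spanI e (act f x).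
Proof.
move=> [c ->]; exists (fun i => f * c i); rewrite act_sum.
by apply: eq_bigr => i _; rewrite actM.
Qed.

Lemma lemC n : forall e : 'I_n -> A, (forall i, inM p (e i)) -> exists s, forall x,
  spanI e x -> (exists j, act (lam_T p ^+ j) x = 0) -> act (lam_T p ^+ s) x = 0.
Proof.
elim: n => [|n IH] e he.
  by exists 0%N => x [c ->] _; rewrite big_ord0 actx0.
pose e' := fun i : 'I_n => e (lift ord0 i).
have [s' hs'] := IH e' (fun i => he _).
have [b hb] := he ord0.
have [s hs] := lemB (S := spanI e') (@spanID _ e') (@spanIA _ e')
   (g := e ord0) (b := b) ltac:(rewrite hb; exact: spanI0).
exists (s' + s)%N => x [c ex] [j hj].
rewrite big_ord_recl /= in ex.
set x' := \sum_(i < n) _ in ex.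
have sx' : spanI e' x' by exists (fun i => c (lift ord0 i)).
have h1 : spanI e' (act (lam_T p ^+ j * c ord0) (e ord0)).
  have -> : act (lam_T p ^+ j * c ord0) (e ord0) = act (-1) (act (lam_T p ^+ j) x').
    rewrite ex actxD in hj; rewrite actM.
    by move/eqP: hj; rewrite addr_eq0 => /eqP ->; rewrite actN act1.
  by apply: spanIA; apply: spanIA.
have h2 := hs _ (ex_intro _ j h1).
have h3 : spanI e' (act (lam_T p ^+ s) x).
  by rewrite ex actxD -actM; apply: spanID => //; apply: spanIA.
rewrite exprD actM; apply: hs' => //.
by exists j; rewrite act_comm hj actx0.
Qed.


Lemma digit0_r1 (a : ZZ) : (a 0%N : nat) = r1 a.
Proof. by rewrite digit_trunc // (_ : (p ^ 0)%N = 1%N) // divn1. Qed.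

Lemma r1_sum0 N (F : 'I_N -> ZZ) : (forall j, r1 (F j) = 0%N) -> r1 (\sum_(j < N) F j) = 0%N.
Proof.
elim: N F => [|N IH] F h; first by rewrite big_ord0 r1_0.
rewrite big_ord_recr /= r1_add IH; [by rewrite h mod0n | by move=> j; rewrite h].
Qed.

Lemma dist_mul (P Q : L) : distinguished P -> distinguished Q -> distinguished (P * Q).
Proof.
move=> [n [Pn Pg Pl]] [m [Qm Qg Ql]]; exists (n + m)%N; split.
- have hn : (n < (n + m).+1)%N by rewrite ltnS leq_addr.
  rewrite lam_mulE' (bigD1 (Ordinal hn)) //= addKn Pn Qm mul1r.
  rewrite big1 ?addr0 // => j /eqP jn.
  case: (ltngtP j n) => jn'.
  + by rewrite Qg ?mulr0 //; lia.
  + by rewrite Pg ?mul0r.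
  + by exfalso; apply: jn; apply: val_inj.
- move=> i ci; rewrite lam_mulE' big1 // => j _.
  case: (ltnP n j) => jn; first by rewrite Pg ?mul0r.
  by rewrite Qg ?mulr0 //; lia.
- move=> i ci; rewrite digit0_r1 lam_mulE'; apply: r1_sum0 => j.
  rewrite r1_mul; case: (ltnP j n) => jn.
    by have := Pl _ jn; rewrite digit0_r1 => ->; rewrite mul0n mod0n.
  have := ltn_ord j; rewrite ltnS => ji.
  by have := Ql (i - j)%N ltac:(lia); rewrite digit0_r1 => ->; rewrite muln0 mod0n.
Qed.

Lemma dist_TX s : distinguished (lam_T p ^+ s).
Proof.
exists s; split.
- by rewrite lamTX_coef eqxx.
- by move=> i si; rewrite lamTX_coef gtn_eqF.
- by move=> i ils; rewrite lamTX_coef ltn_eqF // digit0_r1 r1_0.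
Qed.

Lemma dist_1 : distinguished (1 : L).
Proof. by rewrite -(expr0 (lam_T p)); exact: dist_TX. Qed.


Lemma nonzero_factor (f : L) : f <> lam_zero p ->
  exists a h, f = Pz ^+ a * h /\ ~ pdiv h.
Proof.
move=> fz.
have [i fi] : exists i, f i <> 0.
  apply: contrapT => h; apply: fz; apply: lam_ext => i; rewrite lam_zeroE.
  by apply: contrapT => hi; apply: h; exists i.
have [n hn] : exists n, T (f i) n <> T 0 n.
  apply: contrapT => h; apply: fi; apply: zp_eqP => // n.
  by apply: contrapT => hi; apply: h; exists n.
case: (factor f n) => [[h eh]|[a [h [_ [eh nh]]]]]; last by exists a, h.
exfalso; apply: hn; rewrite eh PzX natL_mul T_mulE T_natr modnn mul0n mod0n.
by rewrite T_0.
Qed.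

Lemma dist_kill (x : A) (f : L) : f <> lam_zero p -> act f x = 0 ->
  exists P, distinguished P /\ inM p (act P x).
Proof.
move=> fz fx.
have [a [h [eh nh]]] := nonzero_factor fz.
have [c [v [r hT]]] := unitU nh.
have [q [P [dP qP]]] := weier hT.
exists P; split => //; exists a.
by rewrite -act_Pz -actM -qP mulrCA -eh actM fx actx0.
Qed.

Lemma inM_sum n (F : 'I_n -> A) : (forall i, inM p (F i)) -> inM p (\sum_(i < n) F i).
Proof.
elim: n F => [|n IH] F h; first by rewrite big_ord0; exists 0%N; rewrite mul0rn.
by rewrite big_ord_recr /=; apply: inM_add => //; apply: IH.
Qed.

Lemma part2 : finitely_generated act -> lam_torsion act ->
  exists G : L, [/\ distinguished G,
     (forall a : A, inM p (act G a)) &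
     (forall (a : A) (k : nat), is_ord p (act G a) k ->
        is_essord act (act G a) k)].
Proof.
move=> [n [e he]] Htor.
have hP : forall i : 'I_n, exists P, distinguished P /\ inM p (act P (e i)).
  by move=> i; have [f fz fx] := Htor (e i); exact: dist_kill fz fx.
have [Pf hPf] := choice hP.
pose G1 := \prod_(i < n) Pf i.
have dG1 : distinguished G1.
  rewrite /G1; elim/big_ind: _ => [|x y|i _]; [exact: dist_1 | exact: dist_mul | by case: (hPf i)].
have MG1 : forall i, inM p (act G1 (e i)).
  move=> i; rewrite /G1 (bigD1 i) //= mulrC actM; apply: inM_act.
  by case: (hPf i).
pose e' := fun i => act G1 (e i).
have [s hs] := lemC MG1.
exists (lam_T p ^+ s * G1); split.
- exact: dist_mul (dist_TX s) dG1.
- move=> a; have [c ->] := he a; rewrite act_sum; apply: inM_sum => i.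
  by rewrite act_comm; apply: inM_act; rewrite actM; apply: inM_act.
move=> a k [hk hk']; exists 0%N => j _; split.
  by rewrite act_iter -act_mulrn hk actx0.
move=> k' kk' hz; apply: (hk' k' kk').
have sx : spanI e' (act G1 a *+ (p ^ k')).
  rewrite -act_natr; apply: spanIA; have [c ->] := he a; rewrite act_sum.
  by exists c; apply: eq_bigr => i _; rewrite act_comm.
have eq : act (lam_T p ^+ s * G1) a *+ (p ^ k') = act (lam_T p ^+ s) (act G1 a *+ (p ^ k')).
  by rewrite actM act_mulrn.
rewrite eq; apply: hs => //.
exists (j + s)%N.
by rewrite exprD actM -eq act_mulrn -act_iter.
Qed.

Lemma part1 (x : A) (l : nat) (g : L) : (1 <= l)%N -> is_essord act x l -> act g x = 0 ->
  exists h : L, g = lam_mul (lam_const (zp_nat p (p ^ l))) h.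
Proof.
move=> l1 [J hJ] hg.
rewrite zp_natE const_nat.
case: (factor g l) => [[h eh]|[a [h [al [eh nh]]]]].
  by exists h; rewrite eh PzX.
exfalso.
have [c [v [r hT]]] := unitU nh.
have [_ o2] := hJ (J + c)%N (leq_addr c J).
have [o3 _] := hJ J (leqnn J).
apply: (o2 (l - 1)%N); first lia.
set b := (l - 1 - a)%N.
have el1 : (l - 1)%N = (b + a)%N by rewrite /b; lia.
have el : l = (b + a).+1 by rewrite /b; lia.
rewrite act_iter -act_Pz -actM el1.
rewrite act_iter -act_Pz -actM el in o3.
have -> : Pz ^+ (b + a) * lam_T p ^+ (J + c) =
    (Pz ^+ b * lam_T p ^+ J * v) * g + r * (Pz ^+ (b + a).+1 * lam_T p ^+ J).
  rewrite eh exprS !exprD hT; ring.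
by rewrite actD actM hg actx0 add0r actM o3 actx0.
Qed.

Lemma part3 (x : A) (k : nat) (c z : A) :
  ~ inD act x -> is_delta act x k ->
  x *+ (p ^ k) = c + z -> inL act c -> inM p z ->
  ~ (exists c' : A, inL act c' /\ c = c' *+ p).
Proof.
move=> nD [k0 _ hmin] ex _ [m hm] [c' [hc' ec]].
have hk : k = (k - 1).+1 by lia.
have D : inD act (x *+ (p ^ (k - 1))).
  exists c', (x *+ (p ^ (k - 1)) - c'); split => //; last by rewrite addrC subrK.
  exists m.+1; rewrite expnS mulrnA mulrnBl -mulrnA -expnSr -hk ex ec addrC addKr hm.
  by [].
case: (posnP (k - 1)) => k1.
  by apply: nD; rewrite k1 expn0 mulr1n in D.
by apply: (hmin (k - 1)%N) => //; rewrite k1 /=; lia.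
Qed.
End Mod.

End Iw.

Theorem mainTheorem3 (p : nat) (p_prime : prime p) (p_odd : odd p)
  (A : zmodType) (act : Lam p -> A -> A)
  (Hmod : is_lam_module act)
  (Hfg : finitely_generated act) (Htor : lam_torsion act) :
  (* (i) *)
  (forall (x : A) (l : nat) (g : Lam p),
     inM p x -> 1 <= l -> is_essord act x l -> (act g x = 0)%R ->
     exists h : Lam p, g = lam_mul (lam_const (zp_nat p (p ^ l))) h)
  /\
  (* (ii) *)
  (exists G : Lam p, [/\ distinguished G,
     (forall a : A, inM p (act G a)) &
     (forall (a : A) (k : nat), is_ord p (act G a) k ->
        is_essord act (act G a) k)])
  /\
  (* (iii) *)
  (forall (x : A) (k : nat) (c z : A),
     ~ inD act x -> is_delta act x k ->
     (x *+ (p ^ k) = c + z)%R -> inL act c -> inM p z ->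
     ~ (exists c' : A, inL act c' /\ (c = c' *+ p)%R)).
Proof.
split; [|split].
- move=> x l g _ l1 hx hg; exact: (part1 p_prime Hmod l1 hx hg).
- exact: (part2 p_prime Hmod Hfg Htor).
- move=> x k c z nD hd ex hc hz; exact: (part3 p_prime nD hd ex hc hz).
Qed.
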